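(* Let $G$ be a graph and $k\ge2$. The following are equivalent: (a1) $M_k(G)$ is a non-trivial matroid and $G$ is a cacti-graph; (a2) $M_k(G)$ is a connected matroid.
   Context: Graphs are finite, may have loops and parallel edges, and have no isolated vertices. A leaf is a vertex incident to exactly one edge, which is not a loop. A cacti-graph is a graph with no isolated vertices, no leaves, and no component that is a cycle (equivalently every component has at least two cycles). For $X\subseteq E(G)$, $G\langle X\rangle$ is the subgraph with edge set $X$ and vertex set the vertices incident to $X$. For $k\ge0$, $M_k(G)$ is the matroid on $E(G)$ whose circuits are the inclusion-minimal members of $\{C\subseteq E(G):C\neq\emptyset,\ |C|=|V(G\langle C\rangle)|+k\}$. A matroid is non-trivial if it has at least one circuit and at least one cocircuit; it is connected if its ground set has at least two elements and every two elements lie in a common circuit. *)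

(* Defs.v *)
(* A multigraph (loops and parallel edges allowed) is given by
   finite types V (vertices), E (edges) and an endpoint map ends : E -> V * V;
   a loop is an edge whose two endpoints coincide. *)
From mathcomp Require Import all_boot.
Set Implicit Arguments. Unset Strict Implicit. Unset Printing Implicit Defensive.

Section Graph.
Variables (V E : finType) (ends : E -> V * V).

Definition inc (e : E) (v : V) : bool := ((ends e).1 == v) || ((ends e).2 == v).
Definition is_loop (e : E) : bool := (ends e).1 == (ends e).2.

Definition no_isolated : Prop := forall v : V, exists e : E, inc e v.

(* degree; a loop counts twice *)
Definition deg (v : V) : nat :=
  #|[set e | (ends e).1 == v]| + #|[set e | (ends e).2 == v]|.

Definition leaf (v : V) : Prop :=
  exists e : E, ~~ is_loop e /\ [set f | inc f v] = [set e].

Definition adj : rel V := fun u w =>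
  [exists e, (ends e == (u, w)) || (ends e == (w, u))].

Definition component (v : V) : {set V} := [set w | connect adj v w].

(* a component is a cycle: a connected graph in which every vertex has degree 2
   (this includes a single loop and a pair of parallel edges) *)
Definition component_is_cycle (v : V) : Prop :=
  forall w, w \in component v -> deg w = 2.

Definition cacti_graph : Prop :=
  no_isolated /\ (forall v, ~ leaf v) /\ (forall v, ~ component_is_cycle v).

Definition Vset (X : {set E}) : {set V} := [set v | [exists e in X, inc e v]].

(* the matroid M_k(G), given by its circuits *)
Definition kcand (k : nat) (X : {set E}) : bool :=
  (X != set0) && (#|X| == #|Vset X| + k).
Definition circuit (k : nat) (C : {set E}) : bool := minset (kcand k) C.
Definition indep (k : nat) (X : {set E}) : bool :=
  [forall C : {set E}, (C \subset X) ==> ~~ circuit k C].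
Definition basis (k : nat) (B : {set E}) : bool := maxset (indep k) B.
(* cocircuit: a minimal set meeting every basis (Oxley, Prop. 2.1.19) *)
Definition cocircuit (k : nat) (D : {set E}) : bool :=
  minset (fun X : {set E} => [forall B : {set E}, basis k B ==> (X :&: B != set0)]) D.

Definition nontrivial_M (k : nat) : Prop :=
  (exists C, circuit k C) /\ (exists D, cocircuit k D).

Definition connected_M (k : nat) : Prop :=
  2 <= #|E| /\
  forall e f : E, e != f -> exists C, [/\ circuit k C, e \in C & f \in C].

End Graph.

(* Main.v *)
Require Import Defs.
From mathcomp Require Import all_boot.
From mathcomp Require Import zify.
From Stdlib Require Import ZArith Lia.
Set Implicit Arguments. Unset Strict Implicit. Unset Printing Implicit Defensive.
Section S.
Variables (V E : finType) (ends : E -> V * V).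
Definition fz (X : {set E}) : Z := (Z.of_nat #|X| - Z.of_nat #|Vset ends X|)%Z.
Lemma VsetU (A B : {set E}) : Vset ends (A :|: B) = Vset ends A :|: Vset ends B.
Proof.
apply/setP=> v; rewrite !inE; apply/existsP/orP.
- by case=> e /andP[]; rewrite inE => /orP[] He Hi; [left|right]; apply/existsP; exists e; rewrite He.
- by case=> /existsP[e /andP[He Hi]]; exists e; rewrite inE He ?orbT.
Qed.
Lemma VsetI (A B : {set E}) : Vset ends (A :&: B) \subset Vset ends A :&: Vset ends B.
Proof.
apply/subsetP=> v; rewrite !inE => /existsP[e /andP[]]; rewrite inE => /andP[Ha Hb] Hi.
by apply/andP; split; apply/existsP; exists e; rewrite ?Ha ?Hb.
Qed.
Lemma VsetS (A B : {set E}) : A \subset B -> Vset ends A \subset Vset ends B.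
Proof.
move=> /subsetP AB; apply/subsetP=> v; rewrite !inE => /existsP[e /andP[He Hi]].
by apply/existsP; exists e; rewrite AB.
Qed.
Lemma Vset0 : Vset ends set0 = set0.
Proof. by apply/setP=> v; rewrite !inE; apply/existsP=> [[e]]; rewrite inE. Qed.
Lemma fz0 : fz set0 = 0%Z.
Proof. by rewrite /fz Vset0 !cards0. Qed.
Lemma fz_sup (A B : {set E}) : (fz A + fz B <= fz (A :|: B) + fz (A :&: B))%Z.
Proof.
rewrite /fz VsetU.
have h1 := cardsUI A B. have h2 := cardsUI (Vset ends A) (Vset ends B).
have h3 := subset_leq_card (VsetI A B).
lia.
Qed.
Lemma fz_del (Z : {set E}) x : (fz Z <= fz (Z :\ x) + 1)%Z.
Proof.
rewrite /fz.
have h1 := subset_leq_card (VsetS (subsetDl Z [set x])).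
case: (boolP (x \in Z)) => xZ.
- have := cardsD1 x Z; rewrite xZ. lia.
- rewrite (setDidPl _) //. lia. by rewrite disjoint_sym disjoints1.
Qed.
Definition nN (X : {set E}) : nat := \max_(Z in powerset X) (#|Z| - #|Vset ends Z|).
Definition nz X : Z := Z.of_nat (nN X).
Lemma nz_ge (X Y : {set E}) : Y \subset X -> (fz Y <= nz X)%Z.
Proof.
move=> YX; rewrite /nz /fz.
have := @leq_bigmax_cond _ (mem (powerset X)) (fun Z : {set E} => #|Z| - #|Vset ends Z|) Y.
have YP : Y \in powerset X by rewrite inE.
move/(_ YP); rewrite -/(nN X). lia.
Qed.
Lemma nz_ex (X : {set E}) : exists Y : {set E}, Y \subset X /\ fz Y = nz X.
Proof.
have : 0 < #|powerset X| by apply/card_gt0P; exists set0; rewrite inE sub0set.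
move/(eq_bigmax_cond (fun Z : {set E} => #|Z| - #|Vset ends Z|)) => [Y]; rewrite inE => YX.
rewrite -/(nN X) /nz => ->.
case: (leqP #|Vset ends Y| #|Y|) => h.
- exists Y; split => //; rewrite /fz; lia.
- exists set0; split; first exact: sub0set. rewrite fz0; lia.
Qed.
Lemma nz_ge0 (X : {set E}) : (0 <= nz X)%Z.
Proof. rewrite /nz; lia. Qed.
Lemma nz_mono (X Y : {set E}) : X \subset Y -> (nz X <= nz Y)%Z.
Proof.
move=> XY; have [Z [ZX <-]] := nz_ex X; apply: nz_ge; exact: subset_trans XY.
Qed.
Lemma nz_add1 (X : {set E}) x : (nz (x |: X) <= nz X + 1)%Z.
Proof.
have [Z [ZX <-]] := nz_ex (x |: X).
have h := @fz_del Z x.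
have : Z :\ x \subset X.
  apply/subsetP=> y; rewrite !inE => /andP[yx yZ].
  by move/subsetP: ZX => /(_ y yZ); rewrite !inE (negbTE yx).
move/nz_ge; lia.
Qed.
Lemma nz_sup (A B : {set E}) : (nz A + nz B <= nz (A :|: B) + nz (A :&: B))%Z.
Proof.
have [ZA [HA <-]] := nz_ex A; have [ZB [HB <-]] := nz_ex B.
have h := @fz_sup ZA ZB.
have h1 : ZA :|: ZB \subset A :|: B by apply: setUSS.
have h2 : ZA :&: ZB \subset A :&: B by apply: setISS.
have := nz_ge h1; have := nz_ge h2; lia.
Qed.
Lemma nz_unionU (S D : {set E}) : (nz (S :|: D) <= nz S + Z.of_nat #|D|)%Z.
Proof.
have [m] := ubnP #|D|; elim: m D => // m IH D Dm.
case: (set_0Vmem D) => [->|[y yD]].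
  by rewrite setU0 cards0; lia.
have eD : D = y |: (D :\ y) by rewrite setD1K.
have cD := cardsD1 y D; rewrite yD in cD.
have Hm : (#|D :\ y| < m) by move: Dm; rewrite ltnS; lia.
have H := IH (D :\ y) Hm.
have -> : S :|: D = y |: (S :|: D :\ y) by rewrite {1}eD setUCA.
have := @nz_add1 (S :|: D :\ y) y. lia.
Qed.
Lemma nz_unionL (A D : {set E}) :
  (forall y, y \in D -> (nz A + 1 <= nz (y |: A))%Z) -> [disjoint D & A] ->
  (nz A + Z.of_nat #|D| <= nz (A :|: D))%Z.
Proof.
have [m] := ubnP #|D|; elim: m D => // m IH D Dm Hy Hd.
case: (set_0Vmem D) => [->|[y yD]].
  by rewrite setU0 cards0; lia.
have eD : D = y |: (D :\ y) by rewrite setD1K.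
have cD := cardsD1 y D; rewrite yD in cD.
have Hd' : [disjoint D :\ y & A].
  by move: Hd; rewrite !disjoints_subset; apply: subset_trans; apply: subsetDl.
have H := IH (D :\ y).
have Hm : (#|D :\ y| < m) by move: Dm; rewrite ltnS; lia.
have H' := H Hm (fun z zD => Hy z (subsetP (subsetDl D [set y]) z zD)) Hd'.
have yA : y \notin A.
  by move: Hd; rewrite disjoints_subset => /subsetP /(_ y yD); rewrite inE.
have e1 : (A :|: D :\ y) :|: (y |: A) = A :|: D.
  apply/setP=> z; rewrite !inE; case: (eqVneq z y) => [->|zy] /=; first by rewrite yD !orbT.
  by case: (z \in A); rewrite ?orbT ?orbF.
have e2 : (A :|: D :\ y) :&: (y |: A) = A.
  apply/setP=> z; rewrite !inE; case: (eqVneq z y) => [->|zy] /=.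
    by rewrite (negbTE yA).
  by case: (z \in A); rewrite ?andbT ?andbF.
have := @nz_sup (A :|: D :\ y) (y |: A); rewrite e1 e2.
have := H'.
have := Hy y yD. lia.
Qed.
Lemma fund (X : {set E}) g : g \notin X -> (nz (setT :\ g) < nz setT)%Z ->
  exists B : {set E}, g \notin B /\ (nz (X :|: B) <= nz X)%Z /\ (nz X + 1 <= nz (g |: (X :|: B)))%Z.
Proof.
move=> gX Hg.
pose P := fun B : {set E} => (g \notin B) && (nz (X :|: B) <=? nz X)%Z.
have P0 : P set0 by rewrite /P inE setU0; apply/andP; split => //; apply/Z.leb_le; lia.
have [B /maxsetP [PB Bmax] _] := maxset_exists P0.
move: PB => /andP[gB /Z.leb_le HB].
exists B; split => //; split => //.
case: (Z_le_gt_dec (nz X + 1) (nz (g |: (X :|: B)))) => // Hc.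
exfalso.
have [A eA] : {A : {set E} | A = X :|: B} by exists (X :|: B).
rewrite -eA in HB Hc.
have [D eD] : {D : {set E} | D = ~: (g |: A)} by exists (~: (g |: A)).
have nA : nz A = nz X by have := nz_mono (subsetUl X B); rewrite -eA; lia.
have Hy : forall y, y \in D -> (nz A + 1 <= nz (y |: A))%Z.
  move=> y yD.
  case: (Z_le_gt_dec (nz A + 1) (nz (y |: A))) => // Hc2; exfalso.
  move: yD; rewrite eD !inE negb_or => /andP[yg yA].
  have PyB : P (y |: B).
    rewrite /P !inE negb_or eq_sym yg gB /=; apply/Z.leb_le.
    have -> : X :|: (y |: B) = y |: A by rewrite eA setUCA.
    lia.
  have := Bmax _ PyB (subsetUr _ _) => /setP /(_ y); rewrite !inE eqxx /= => yB.
  by move: yA; rewrite eA inE -yB orbT.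
have Hd : [disjoint D & A].
  by rewrite eD -setI_eq0; apply/eqP/setP=> z; rewrite !inE; case: (z \in A); rewrite ?orbT ?andbF.
have H1 := nz_unionL Hy Hd.
have H2 : A :|: D \subset setT :\ g.
  apply/subsetP=> z; rewrite eD !inE negb_or.
  case/orP => [zA|/andP[zg _]]; last by rewrite zg.
  rewrite andbT; apply/eqP=> zg; move: zA; rewrite zg eA inE (negbTE gX) (negbTE gB) //.
have H3 := nz_mono H2.
have H4 : (g |: A) :|: D = setT by rewrite eD setUCr.
have := @nz_unionU (g |: A) D; rewrite H4.
lia.
Qed.
Definition tight (T : {set E}) := forall Z : {set E}, Z \proper T -> (fz Z < fz T)%Z.
Lemma tight_nz (T : {set E}) : tight T -> nz T = fz T.
Proof.
move=> tT; have [Y [ZT eY]] := nz_ex T.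
have h := @nz_ge T T (subxx _).
case: (eqVneq Y T) => [eYT|ZT']; first by rewrite -eY eYT.
have : Y \proper T by rewrite properEneq ZT' ZT.
move/tT; lia.
Qed.
Lemma ext (X : {set E}) g : tight X -> g \notin X -> (nz (setT :\ g) < nz setT)%Z ->
  exists T : {set E}, [/\ tight T, X \subset T, g \in T & fz T = (fz X + 1)%Z].
Proof.
move=> tX gX Hg.
have [B [gB [HB1 HB2]]] := fund gX Hg.
have nX := tight_nz tX.
pose S := g |: (X :|: B).
pose P := fun T : {set E} => (T \subset S) && (fz X + 1 <=? fz T)%Z.
have [Z0 [Z0S eZ0]] := nz_ex S.
have PZ0 : P Z0 by rewrite /P Z0S /=; apply/Z.leb_le; rewrite eZ0 -nX; exact: HB2.
have [T /minsetP [PT Tmin] _] := minset_exists PZ0.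
move: PT => /andP[TS /Z.leb_le HT].
have nS : (nz S <= fz X + 1)%Z by have := @nz_add1 (X :|: B) g; rewrite -/S; lia.
have fT : fz T = (fz X + 1)%Z by have := nz_ge TS; lia.
exists T; split => //.
- move=> Z ZT.
  case: (Z_le_gt_dec (fz X + 1) (fz Z)) => H; last by lia.
  have PZ : P Z by rewrite /P (subset_trans (proper_sub ZT) TS); apply/Z.leb_le.
  have := Tmin _ PZ (proper_sub ZT) => eZ.
  by move: ZT; rewrite eZ properE subxx.
- apply/negPn/negP => XT.
  have pr : T :&: X \proper X.
    rewrite properEneq subsetIr andbT; apply: contra XT => /eqP <-; exact: subsetIl.
  have := tX _ pr => h1.
  have h2 := @fz_sup T X.
  have : T :|: X \subset S.
    by rewrite subUset TS /S; apply/subsetP=> x xX; rewrite !inE xX orbT.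
  move/nz_ge => h3.
  lia.
- apply/negPn/negP => gT.
  have : T \subset X :|: B.
    apply/subsetP=> x xT; move/subsetP: TS => /(_ x xT); rewrite /S !inE.
    case/orP=> [/eqP xg|->//]; by move: gT; rewrite -xg xT.
  move/nz_ge => h; lia.
Qed.
Lemma growth (T : {set E}) (k : nat) : tight T -> (fz T <= Z.of_nat k)%Z -> (Z.of_nat k <= fz setT)%Z ->
  exists W : {set E}, [/\ T \subset W, tight W & fz W = Z.of_nat k].
Proof.
move=> tT HT Hk.
pose P := fun W : {set E} => (T \subset W) && (Z.of_nat k <=? fz W)%Z.
have PT : P setT by rewrite /P subsetT; apply/Z.leb_le.
have [W /minsetP [PW Wmin] _] := minset_exists PT.
move: PW => /andP[TW /Z.leb_le HW].
have fW : fz W = Z.of_nat k.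
  case: (eqVneq W T) => [eWT|nWT]; first by rewrite eWT in HW *; lia.
  have [w wW wT] : exists2 w, w \in W & w \notin T.
    apply/exists_inP; rewrite -(negbK [exists _ in _, _]) negb_exists_in.
    apply/negP => /forall_inP H; case/negP: nWT; rewrite eqEsubset TW andbT.
    by apply/subsetP=> x xW; move: (H x xW); rewrite negbK.
  have TW' : T \subset W :\ w.
    by apply/subsetP=> x xT; rewrite !inE (subsetP TW x xT) andbT; apply: contraNneq wT => <-.
  case: (Z_le_gt_dec (Z.of_nat k) (fz (W :\ w))) => H.
    have PW' : P (W :\ w) by rewrite /P TW'; apply/Z.leb_le.
    have := Wmin _ PW' (subsetDl _ _) => /setP /(_ w); by rewrite !inE eqxx wW.
  have := @fz_del W w; lia.
exists W; split => // Z ZW.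
have hI : (fz (Z :&: T) <= fz T)%Z.
  case: (eqVneq (Z :&: T) T) => [->|ne]; first by lia.
  have : Z :&: T \proper T by rewrite properEneq ne subsetIr.
  move/tT; lia.
have hs := @fz_sup Z T.
have ZTW : Z :|: T \subset W by rewrite subUset (proper_sub ZW) TW.
case: (eqVneq (Z :|: T) W) => [eU|nU].
- have ne : Z :&: T != T.
    apply: contraTneq ZW => eI.
    have : T \subset Z by rewrite -eI subsetIl.
    move=> TZ; rewrite -eU (setUidPl TZ) properE subxx //.
  have : Z :&: T \proper T by rewrite properEneq ne subsetIr.
  move/tT; rewrite eU in hs; lia.
- case: (Z_le_gt_dec (Z.of_nat k) (fz (Z :|: T))) => H; last by lia.
  have PZ : P (Z :|: T) by rewrite /P subsetUr; apply/Z.leb_le.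
  by have := Wmin _ PZ ZTW; move/eqP: nU.
Qed.
Lemma interp (k : nat) (Y : {set E}) : 0 < k -> Y != set0 -> (Z.of_nat k <= fz Y)%Z ->
  exists Z : {set E}, Z \subset Y /\ kcand ends k Z.
Proof.
move=> k0 Y0 HY.
pose P := fun Z : {set E} => (Z != set0) && (Z.of_nat k <=? fz Z)%Z.
have PY : P Y by rewrite /P Y0; apply/Z.leb_le.
have [Z /minsetP [PZ Zmin] ZY] := minset_exists PY.
move: PZ => /andP[Z0 /Z.leb_le HZ].
exists Z; split => //.
case: (Z_le_gt_dec (fz Z) (Z.of_nat k)) => H.
  rewrite /kcand Z0 /=; apply/eqP; move: H HZ; rewrite /fz; lia.
exfalso.
have [z zZ] := set0Pn _ Z0.
have cZ := cardsD1 z Z; rewrite zZ in cZ.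
have hV : (fz Z <= Z.of_nat #|Z|)%Z by rewrite /fz; lia.
case: (eqVneq (Z :\ z) set0) => [e0|ne0].
  rewrite e0 cards0 in cZ; lia.
have PZ' : P (Z :\ z).
  rewrite /P ne0 /=; apply/Z.leb_le; have := @fz_del Z z; lia.
have := Zmin _ PZ' (subsetDl _ _) => /setP /(_ z); by rewrite !inE eqxx zZ.
Qed.
Lemma tight_circuit (k : nat) (W : {set E}) : tight W -> fz W = Z.of_nat k -> 0 < k -> circuit ends k W.
Proof.
move=> tW fW k0; apply/minsetP; split.
  rewrite /kcand; apply/andP; split.
    by apply/eqP => W0; move: fW; rewrite W0 fz0; lia.
  by apply/eqP; move: fW; rewrite /fz; lia.
move=> Y /andP[Y0 /eqP HY] YW.
apply/eqP; apply: contraTT isT => nYW.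
have : Y \proper W by rewrite properEneq nYW YW.
move/tW; rewrite /fz in fW *; lia.
Qed.
Lemma circuit_tight (k : nat) (C : {set E}) : 0 < k -> circuit ends k C -> tight C /\ fz C = Z.of_nat k.
Proof.
move=> k0 /minsetP [/andP[C0 /eqP HC] Cmin].
have fC : fz C = Z.of_nat k by rewrite /fz HC; lia.
split => // Z ZC.
case: (eqVneq Z set0) => [->|Z0]; first by rewrite fz0; lia.
case: (Z_le_gt_dec (Z.of_nat k) (fz Z)) => H; last by lia.
have [Z' [Z'Z kZ']] := interp k0 Z0 H.
have := Cmin _ kZ' (subset_trans Z'Z (proper_sub ZC)) => eZ'.
rewrite eZ' in Z'Z; move: ZC; rewrite properE Z'Z andbF //.
Qed.
Lemma sum_card (A : {set E}) (U : {set V}) (p : E -> V) :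
  \sum_(w in U) #|[set a in A | p a == w]| = #|[set a in A | p a \in U]|.
Proof.
rewrite -sum1_card (partition_big p (mem U)) /=; last by move=> a; rewrite inE => /andP[].
apply: eq_bigr => w wU; rewrite -sum1_card; apply: eq_bigl => a; rewrite !inE.
by case: eqP => [->|_]; rewrite ?wU ?andbT ?andbF.
Qed.
Lemma adj_sym u w : adj ends u w = adj ends w u.
Proof. by apply/existsP/existsP => -[e He]; exists e; rewrite orbC. Qed.
Lemma adj_ends a : adj ends (ends a).1 (ends a).2.
Proof. by apply/existsP; exists a; rewrite -surjective_pairing eqxx. Qed.
Lemma comp2 v a : ((ends a).1 \in component ends v) = ((ends a).2 \in component ends v).
Proof.
rewrite !inE; apply/idP/idP => H; apply: (connect_trans H); apply: connect1.
  exact: adj_ends.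
by rewrite adj_sym; exact: adj_ends.
Qed.
Lemma deg_ge2 : no_isolated ends -> (forall v, ~ leaf ends v) -> forall w, 1 < deg ends w.
Proof.
move=> Hi Hl w; have [e He] := Hi w.
rewrite /deg.
have Hsub : [set f | inc ends f w] = [set f | (ends f).1 == w] :|: [set f | (ends f).2 == w].
  by apply/setP=> f; rewrite !inE.
have Hle : #|[set f | inc ends f w]| <= #|[set f | (ends f).1 == w]| + #|[set f | (ends f).2 == w]|.
  by rewrite Hsub cardsU leq_subr.
case: (boolP (is_loop ends e)) => Hloop.
- move: He; rewrite /inc; move: Hloop; rewrite /is_loop => /eqP Hl12.
  rewrite Hl12 orbb => /eqP He2.
  have h1 : 0 < #|[set f | (ends f).1 == w]| by apply/card_gt0P; exists e; rewrite inE Hl12 He2.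
  have h2 : 0 < #|[set f | (ends f).2 == w]| by apply/card_gt0P; exists e; rewrite inE He2.
  lia.
- case: (boolP [exists f, inc ends f w && (f != e)]) => [/existsP [f /andP[Hf fe]]|Hn].
  + have : [set e; f] \subset [set f | inc ends f w].
      by apply/subsetP=> x; rewrite !inE => /orP[]/eqP->.
    move/subset_leq_card; rewrite cards2 eq_sym fe. lia.
  + exfalso; apply: (Hl w); exists e; split => //.
    apply/setP=> f; rewrite !inE; apply/idP/idP => [Hf|/eqP->//].
    apply/negPn/negP => fe; case/negP: Hn; apply/existsP; exists f; by rewrite Hf.
Qed.
Lemma sumdeg (U : {set V}) : \sum_(w in U) deg ends w =
  #|[set a in [set: E] | (ends a).1 \in U]| + #|[set a in [set: E] | (ends a).2 \in U]|.
Proof.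
rewrite -!sum_card -big_split; apply: eq_bigr => w _; rewrite /deg.
by congr (_ + _); apply: eq_card => a; rewrite !inE.
Qed.
Lemma Kpos v : no_isolated ends -> (forall v, ~ leaf ends v) -> ~ component_is_cycle ends v ->
  #|component ends v| < #|[set a | (ends a).1 \in component ends v]|.
Proof.
move=> Hi Hl Hc.
have Hd := deg_ge2 Hi Hl.
have [w0 w0U dw0] : exists2 w0, w0 \in component ends v & deg ends w0 != 2.
  case: (boolP [exists w0 in component ends v, deg ends w0 != 2]) => [/exists_inP[w0 ? ?]|Hn].
    by exists w0.
  exfalso; apply: Hc => w wU; apply/eqP; apply/negPn/negP => Hw.
  by case/negP: Hn; apply/exists_inP; exists w.
have hs := sumdeg (component ends v).
have e1 : [set a in [set: E] | (ends a).1 \in component ends v] = [set a | (ends a).1 \in component ends v].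
  by apply/setP=> a; rewrite !inE.
have e2 : [set a in [set: E] | (ends a).2 \in component ends v] = [set a | (ends a).1 \in component ends v].
  by apply/setP=> a; have := comp2 v a; rewrite !inE /= => ->.
rewrite e1 e2 in hs.
have hsplit : \sum_(w in component ends v) deg ends w =
   \sum_(w in component ends v) 2 + \sum_(w in component ends v) (deg ends w - 2).
  by rewrite -big_split; apply: eq_bigr => w _; have := Hd w; rewrite /=; lia.
rewrite sum_nat_const in hsplit.
have hge : deg ends w0 - 2 <= \sum_(w in component ends v) (deg ends w - 2).
  by rewrite (bigD1 w0) //=; apply: leq_addr.
have := Hd w0. move: dw0 => /eqP dw0. lia.
Qed.
Lemma Vadd (Z : {set E}) y : Vset ends (y |: Z) = [set (ends y).1; (ends y).2] :|: Vset ends Z.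
Proof.
rewrite VsetU; congr (_ :|: _); apply/setP=> x; rewrite !inE.
apply/existsP/idP => [-[e /andP[]]|H].
  by rewrite inE => /eqP ->; rewrite /inc => /orP[]/eqP ->; rewrite eqxx ?orbT.
by exists y; rewrite inE eqxx /= /inc ![_ == x]eq_sym.
Qed.
Lemma Vadd_ex (Z : {set E}) y : ((ends y).1 \in Vset ends Z) || ((ends y).2 \in Vset ends Z) ->
  exists w, [/\ inc ends y w, Vset ends (y |: Z) = w |: Vset ends Z &
                (w \notin Vset ends Z -> ~~ is_loop ends y)].
Proof.
case/orP => H; [exists (ends y).2 | exists (ends y).1]; split; rewrite /inc ?eqxx ?orbT //.
- apply/setP=> x; rewrite Vadd !inE.
  move: H; rewrite inE => H.
  by have [->|nx] := eqVneq x (ends y).1; rewrite ?H ?orbT.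
- by apply: contra => /eqP e; rewrite -e.
- apply/setP=> x; rewrite Vadd !inE.
  move: H; rewrite inE => H.
  by have [->|nx] := eqVneq x (ends y).2; rewrite ?H ?orbT ?orbF.
- by apply: contra => /eqP e; rewrite e.
Qed.
Lemma Etight : no_isolated ends -> (forall v, ~ leaf ends v) ->
  (forall v, ~ component_is_cycle ends v) -> tight setT.
Proof.
move=> Hi Hl Hc Z.
have [m] := ubnP #|~: Z|; elim: m Z => // m IH Z Zm ZT.
have hstep : forall Z' : {set E}, Z \subset Z' -> Z' != Z -> (fz Z' <= fz setT)%Z.
  move=> Z' ZZ' nZ'.
  case: (eqVneq Z' setT) => [->|nT]; first by lia.
  have pZ : Z \proper Z' by rewrite properEneq eq_sym nZ' ZZ'.
  have : #|~: Z'| < m.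
    have := proper_card (pZ : Z \proper Z'); rewrite -properC in pZ.
    have := proper_card pZ; move: Zm; rewrite ltnS. lia.
  move/IH => H; have : Z' \proper setT by rewrite properEneq nT subsetT.
  by move/H; lia.
case: (boolP [exists y, (y \notin Z) && (((ends y).1 \in Vset ends Z) || ((ends y).2 \in Vset ends Z))]).
- move=> /existsP[y /andP[yZ Hy]].
  have [w [Hw HV Hloop]] := Vadd_ex Hy.
  have cZ : #|y |: Z| = (#|Z|).+1 by rewrite cardsU1 yZ.
  have cV := cardsU1 w (Vset ends Z); rewrite -HV in cV.
  have nyZ : y |: Z != Z by apply: contraNneq yZ => <-; rewrite setU11.
  case: (boolP (w \in Vset ends Z)) => wZ.
  + have cV' : #|Vset ends (y |: Z)| = #|Vset ends Z| by rewrite HV cardsU1 wZ.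
    have := hstep _ (subsetUr _ _) nyZ; rewrite /fz cZ cV'; lia.
  + case: (eqVneq (y |: Z) setT) => [eT|nT].
      exfalso; apply: (Hl w); exists y; split; first exact: Hloop.
      apply/setP=> f; rewrite !inE; apply/idP/idP => [Hf|/eqP->//].
      have : f \in y |: Z by rewrite eT inE.
      rewrite !inE => /orP[-> //|fZ].
      case/negP: wZ; rewrite inE; apply/existsP; exists f; by rewrite fZ.
    have : #|~: (y |: Z)| < m.
      have pZ : Z \proper y |: Z by rewrite properEneq eq_sym nyZ subsetUr.
      rewrite -properC in pZ; have := proper_card pZ; move: Zm; rewrite ltnS. lia.
    move/IH => H; have : y |: Z \proper setT by rewrite properEneq nT subsetT.
    have cV' : #|Vset ends (y |: Z)| = (#|Vset ends Z|).+1 by rewrite HV cardsU1 wZ.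
    move/H; rewrite /fz cZ cV'; lia.
- move=> Hn.
  have clos : forall a, ((ends a).1 \in Vset ends Z) || ((ends a).2 \in Vset ends Z) -> a \in Z.
    move=> a Ha; apply/negPn/negP => aZ; case/negP: Hn; apply/existsP; exists a; by rewrite aZ.
  have [_ [y _ yZ]] := properP ZT.
  set v := (ends y).1.
  have hcl : forall x w, adj ends x w -> (x \in Vset ends Z) = (w \in Vset ends Z).
    have one : forall x w, adj ends x w -> x \in Vset ends Z -> w \in Vset ends Z.
      move=> x w /existsP[a Ha] xZ.
      have aZ : a \in Z.
        apply: clos; case/orP: Ha => /eqP ->; by rewrite /= xZ ?orbT.
      rewrite inE; apply/existsP; exists a; rewrite aZ /inc.
      by case/orP: Ha => /eqP -> /=; rewrite eqxx ?orbT.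
    move=> x w Hxw; apply/idP/idP; first exact: one.
    by apply: one; rewrite adj_sym.
  have vZ : v \notin Vset ends Z.
    by apply: contra yZ => vZ; apply: clos; rewrite vZ.
  have Kout : forall a, (ends a).1 \in component ends v ->
      ((ends a).1 \notin Vset ends Z) && ((ends a).2 \notin Vset ends Z).
    move=> a Ha.
    have Hb : (ends a).2 \in component ends v by rewrite -comp2.
    rewrite inE in Ha; move: Hb; rewrite inE => Hb.
    by rewrite -(closed_connect hcl Ha) -(closed_connect hcl Hb) vZ.
  set K := [set a | (ends a).1 \in component ends v].
  have KZ : Z :&: K = set0.
    apply/setP=> a; rewrite !inE; apply/negP => /andP[aZ Ha].
    have /andP[h1 _] := Kout a ltac:(by rewrite inE); case/negP: h1; rewrite inE; apply/existsP; exists a.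
    by rewrite aZ /inc eqxx.
  have VKZ : Vset ends Z :&: Vset ends K = set0.
    apply/setP=> x; rewrite !inE; apply/negP => /andP[xZ /existsP[a /andP[]]].
    rewrite inE => Ha; have /andP[h1 h2] := Kout a Ha.
    by rewrite /inc => /orP[]/eqP Hx; [move: h1|move: h2]; rewrite Hx inE xZ.
  have VKU : Vset ends K \subset component ends v.
    apply/subsetP=> x; rewrite inE => /existsP[a /andP[]]; rewrite inE => Ha.
    by rewrite /inc => /orP[]/eqP <- //; rewrite -comp2.
  have hK := Kpos Hi Hl (Hc v).
  have cVK := subset_leq_card VKU.
  have yK : y \in K by rewrite !inE connect0.
  have nZK : Z :|: K != Z by apply: contraNneq yZ => <-; rewrite inE yK orbT.
  have := hstep _ (subsetUl _ _) nZK.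
  rewrite /fz VsetU.
  have := cardsUI Z K; rewrite KZ cards0.
  have := cardsUI (Vset ends Z) (Vset ends K); rewrite VKZ cards0.
  rewrite -/K in hK. lia.
Qed.
Lemma dir1 (k : nat) : no_isolated ends -> 2 <= k -> nontrivial_M ends k -> cacti_graph ends ->
  connected_M ends k.
Proof.
move=> Hi k2 [[C0 HC0] _] [_ [Hl Hc]].
have k0 : 0 < k by lia.
have tE := Etight Hi Hl Hc.
have [tC0 fC0] := circuit_tight k0 HC0.
have fE : (Z.of_nat k <= fz setT)%Z.
  case: (eqVneq C0 setT) => [<-|n]; first by lia.
  have : C0 \proper setT by rewrite properEneq n subsetT.
  move/tE; lia.
split.
  move: HC0 => /minsetP [/andP[_ /eqP cC] _].
  have := max_card (mem C0); rewrite cC; lia.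
move=> e g neg.
have Hg : forall x, (nz (setT :\ x) < nz setT)%Z.
  move=> x; have [Y [YS eY]] := nz_ex (setT :\ x); rewrite -eY.
  have : Y \proper setT.
    rewrite properEneq subsetT andbT; apply: contraTneq YS => ->.
    by apply/negP => /subsetP /(_ x); rewrite !inE eqxx => /(_ isT).
  move/tE => h; have := @nz_ge setT setT (subxx _); lia.
have t0 : tight set0 by move=> Z; rewrite properE sub0set andbF.
have [T1 [tT1 _ eT1 fT1]] := ext t0 (ltac:(by rewrite inE) : e \notin set0) (Hg e).
rewrite fz0 in fT1.
have [T [tT eT gT fT]] : exists T, [/\ tight T, e \in T, g \in T & (fz T <= 2)%Z].
  case: (boolP (g \in T1)) => gT1.
    by exists T1; split => //; lia.
  have [T2 [tT2 T12 gT2 fT2]] := ext tT1 gT1 (Hg g).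
  by exists T2; split => //; [exact: (subsetP T12) | lia].
have [W [TW tW fW]] := growth tT (ltac:(lia) : (fz T <= Z.of_nat k)%Z) fE.
exists W; split; [exact: tight_circuit | exact: (subsetP TW) | exact: (subsetP TW)].
Qed.
Lemma dir2 (k : nat) : no_isolated ends -> 2 <= k -> connected_M ends k ->
  nontrivial_M ends k /\ cacti_graph ends.
Proof.
move=> Hi k2 [cE Hcon].
have k0 : 0 < k by lia.
have other : forall e : E, exists f, f != e.
  move=> e; have : 0 < #|[set: E] :\ e|.
    have := cardsD1 e [set: E]; rewrite inE cardsT; lia.
  by case/card_gt0P => f; rewrite !inE => /andP[fe _]; exists f.
have [e0 _] : exists e0 : E, true.
  have : 0 < #|[set: E]| by rewrite cardsT; lia.
  by case/card_gt0P => e0 _; exists e0.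
split.
  split.
    have [f0 f0e] := other e0; have [C [HC _ _]] := Hcon _ _ f0e; by exists C.
  pose P := fun X : {set E} => [forall B, basis ends k B ==> (X :&: B != set0)].
  have PT : P setT.
    apply/forallP=> B; apply/implyP=> HB; rewrite setTI.
    apply/eqP => B0; move: HB => /maxsetP [_ Bmax].
    have Hind : indep ends k [set e0].
      apply/forallP=> C; apply/implyP=> CS; apply/negP => /minsetP [/andP[_ /eqP cC] _].
      have := subset_leq_card CS; rewrite cards1 cC. lia.
    have := Bmax _ Hind; rewrite B0 sub0set => /(_ isT) /setP /(_ e0).
    by rewrite !inE eqxx.
  have [D HD _] := minset_exists PT.
  by exists D.
split; first done.
split.
  move=> v [e [Hloop He]].
  have [f0 f0e] := other e; have [C [HC f0C eC]] := Hcon _ _ f0e.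
  have [tC fC] := circuit_tight k0 HC.
  have := tC _ (properD1 eC).
  have ev : inc ends e v by have := He; move/setP /(_ e); rewrite !inE eqxx.
  have vC : v \in Vset ends C by rewrite inE; apply/existsP; exists e; rewrite eC.
  have HV : Vset ends (C :\ e) \subset Vset ends C :\ v.
    apply/subsetP=> x; rewrite inE => /existsP[a /andP[]]; rewrite !inE => /andP[ae aC] ax.
    apply/andP; split; last by apply/existsP; exists a; rewrite aC.
    apply/eqP => xv; move: He => /setP /(_ a); rewrite !inE -xv ax => /esym/eqP ae'.
    by move: ae; rewrite ae' eqxx.
  have c1 := cardsD1 e C; rewrite eC in c1.
  have c2 := cardsD1 v (Vset ends C); rewrite vC in c2.
  have c3 := subset_leq_card HV.
  rewrite /fz in fC *; lia.
move=> v Hcyc.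
have [e He] := Hi v.
have [f0 f0e] := other e; have [C [HC f0C eC]] := Hcon _ _ f0e.
have [tC fC] := circuit_tight k0 HC.
set U := component ends v.
set K := [set a | (ends a).1 \in U].
have eK : e \in K.
  rewrite inE; case/orP: He => /eqP Hv.
    by rewrite Hv inE connect0.
  by rewrite comp2 Hv inE connect0.
set A := C :&: K.
set B := C :\: K.
have VAU : Vset ends A \subset U.
  apply/subsetP=> x; rewrite inE => /existsP[a /andP[]]; rewrite !inE => /andP[_ Ha].
  by rewrite /inc => /orP[]/eqP <- //; have := comp2 v a; rewrite !inE => <-.
have hA : 2 * #|A| <= 2 * #|Vset ends A|.
  have s1 := sum_card A (Vset ends A) (fun a => (ends a).1).
  have s2 := sum_card A (Vset ends A) (fun a => (ends a).2).
  have r1 : [set a in A | (ends a).1 \in Vset ends A] = A.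
    apply/setP=> a; rewrite inE; apply: andb_idr => aA.
    by rewrite inE; apply/existsP; exists a; rewrite aA /inc eqxx.
  have r2 : [set a in A | (ends a).2 \in Vset ends A] = A.
    apply/setP=> a; rewrite inE; apply: andb_idr => aA.
    by rewrite inE; apply/existsP; exists a; rewrite aA /inc eqxx orbT.
  rewrite r1 in s1; rewrite r2 in s2.
  have : \sum_(w in Vset ends A) (#|[set a in A | (ends a).1 == w]| + #|[set a in A | (ends a).2 == w]|)
         <= \sum_(w in Vset ends A) 2.
    apply: leq_sum => w wA.
    have := Hcyc w (subsetP VAU w wA); rewrite /deg => <-.
    apply: leq_add; apply: subset_leq_card; apply/subsetP=> a; rewrite !inE => /andP[_ ->] //.
  rewrite big_split /= s1 s2 sum_nat_const. lia.
have eC' : A :|: B = C by rewrite setID.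
have AB : A :&: B = set0.
  by apply/setP=> a; rewrite !inE; apply/negP => /andP[/andP[_ h] /andP[h' _]]; rewrite h in h'.
have VAB : Vset ends A :&: Vset ends B = set0.
  apply/setP=> x; rewrite in_setI in_set0; apply/negP => /andP[xA].
  rewrite inE => /existsP[b /andP[]]; rewrite !inE => /andP[bK _] bx.
  have xU : connect (adj ends) v x by have := subsetP VAU x xA; rewrite inE.
  move: bK; have := comp2 v b; rewrite !inE => h2 h1.
  by move: bx; rewrite /inc => /orP[]/eqP Hx; [move: h1 | move: h1; rewrite h2]; rewrite Hx xU.
have cE1 := cardsUI A B; rewrite AB cards0 eC' in cE1.
have cE2 := cardsUI (Vset ends A) (Vset ends B); rewrite VAB cards0 -VsetU eC' in cE2.
case: (eqVneq B set0) => [B0|B0].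
  rewrite B0 cards0 in cE1; rewrite /fz in fC; lia.
have : B \proper C.
  rewrite properEneq; apply/andP; split; last by rewrite -eC' subsetUr.
  apply/eqP => BC; have : e \in B by rewrite BC.
  by rewrite /B in_setD eK.
move/tC; rewrite /fz in fC *; lia.
Qed.
End S.

Theorem mainTheorem13 (V E : finType) (ends : E -> V * V) (k : nat) :
  no_isolated ends -> 2 <= k ->
  ((nontrivial_M ends k /\ cacti_graph ends) <-> connected_M ends k).
Proof.
move=> Hi k2; split.
  by case=> H1 H2; apply: dir1.
exact: dir2.
Qed.
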